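(* There is a randomized algorithm which, given a set $P$ of $n$ elements and access to a query oracle for a poset $(P,\succ)$ of width at most $w$, finds the set of minimal elements of $(P,\succ)$, and whose expected number of oracle queries is at most $$\frac{w+1}{2}\,n+\frac{w^2-w}{2}\,(\log n-\log w).$$
   Context: A poset $(P,\succ)$ consists of a set $P$ and an irreflexive, transitive relation $\succ$. Elements $a,b$ are incomparable if neither $a\succ b$ nor $b\succ a$; the width is the maximum size of a set of mutually incomparable elements. An element $a$ is minimal if there is no $b$ with $a\succ b$. A query oracle answers a query on $(x,y)$ by reporting whether $x\succ y$, $y\succ x$, or they are incomparable. Logarithms are base $2$. *)

(* Defs.v *)
From Stdlib Require Import Reals.
From mathcomp Require Import all_boot.

Set Implicit Arguments.
Unset Strict Implicit.
Unset Printing Implicit Defensive.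

(* A poset on the ground set P = 'I_n is given by its strict relation
   r x y  <->  x ≻ y. *)
Definition is_poset n (r : rel 'I_n) : Prop :=
  (forall x, ~~ r x x) /\ (forall x y z, r x y -> r y z -> r x z).

Definition antichain n (r : rel 'I_n) (A : {set 'I_n}) : Prop :=
  forall x y, x \in A -> y \in A -> x != y -> ~~ r x y /\ ~~ r y x.

Definition width_le n (r : rel 'I_n) (w : nat) : Prop :=
  forall A : {set 'I_n}, antichain r A -> #|A| <= w.

Definition minimal_set n (r : rel 'I_n) : {set 'I_n} :=
  [set a | [forall b, ~~ r a b]].

Inductive answer := Succ | Prec | Incomp.

Definition oracle n (r : rel 'I_n) (x y : 'I_n) : answer :=
  if r x y then Succ else if r y x then Prec else Incomp.

(* Randomized query algorithms on ground set 'I_n, as finite decision trees: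
   - Ret S     : stop and output the set S;
   - Query x y k : ask the oracle about (x,y) and continue with k (answer);
   - Rand k f  : draw i uniformly at random from 'I_(k.+1), continue with f i. *)
Inductive alg (n : nat) : Type :=
| Ret : {set 'I_n} -> alg n
| Query : 'I_n -> 'I_n -> (answer -> alg n) -> alg n
| Rand : forall k : nat, ('I_k.+1 -> alg n) -> alg n.

Fixpoint always_outputs n (r : rel 'I_n) (S : {set 'I_n}) (a : alg n) : Prop :=
  match a with
  | Ret T => T = S
  | Query x y k => always_outputs r S (k (oracle r x y))
  | Rand k f => forall i, always_outputs r S (f i)
  end.

Fixpoint expected_queries n (r : rel 'I_n) (a : alg n) : R :=
  match a with
  | Ret _ => R0
  | Query x y k => Rplus R1 (expected_queries r (k (oracle r x y)))
  | Rand k f =>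
      Rdiv (foldr (fun i acc => Rplus (expected_queries r (f i)) acc) R0
              (enum 'I_k.+1))
           (INR k.+1)
  end.

Definition log2 (x : R) : R := Rdiv (ln x) (ln (INR 2)).

(* Main.v *)
Require Import Defs.
From Stdlib Require Import Reals Lra.
From mathcomp Require Import all_boot.
Local Open Scope R_scope.

Definition sumR {A} (l : seq A) (F : A -> R) : R :=
  foldr (fun y acc => F y + acc) 0 l.

Lemma sumR_le {A : eqType} (l : seq A) F G :
  (forall y, y \in l -> F y <= G y) -> sumR l F <= sumR l G.
Proof.
elim: l => [|a l IH] H /=; first lra.
apply: Rplus_le_compat; first by apply: H; rewrite inE eqxx.
by apply: IH => y Hy; apply: H; rewrite inE Hy orbT.
Qed.

Lemma sumR_add {A} (l : seq A) F G :
  sumR l (fun y => F y + G y) = sumR l F + sumR l G.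
Proof. elim: l => [|a l IH] /=; [lra|rewrite IH; lra]. Qed.

Lemma sumR_const {A} (l : seq A) c : sumR l (fun _ => c) = INR (size l) * c.
Proof.
elim: l => [|a l IH]; first by rewrite /sumR /=; lra.
change (c + sumR l (fun _ => c) = INR (size l).+1 * c).
rewrite IH S_INR; lra.
Qed.

Lemma sumR_ind {A} (l : seq A) (p : pred A) c :
  sumR l (fun y => if p y then c else 0) = INR (count p l) * c.
Proof.
elim: l => [|a l IH]; first by rewrite /sumR /=; lra.
change ((if p a then c else 0) + sumR l (fun y => if p y then c else 0)
   = INR (p a + count p l)%N * c).
rewrite IH; case: (p a); rewrite ?add1n ?add0n ?S_INR; lra.
Qed.

Lemma E_rand n (r : rel 'I_n) (g : 'I_n -> alg n) s M' :
  expected_queries r (Rand (fun i : 'I_(size M').+1 => g (nth s (s :: M') i))) =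
  sumR (s :: M') (fun y => expected_queries r (g y)) / INR (size M').+1.
Proof.
rewrite /=; congr (_ / _).
have -> : foldr (fun (i : 'I_(size M').+1) acc =>
    expected_queries r (g (nth s (s :: M') i)) + acc) 0 (enum 'I_(size M').+1)
  = foldr (fun y acc => expected_queries r (g y) + acc) 0
      (map (fun i : 'I_(size M').+1 => nth s (s :: M') i) (enum 'I_(size M').+1)).
  by rewrite foldr_map.
have Hm : [seq nth s (s :: M') i | i : 'I_(size M').+1 <- enum 'I_(size M').+1]
   = s :: M'.
  have -> : [seq nth s (s :: M') i | i : 'I_(size M').+1 <- enum 'I_(size M').+1]
     = map (nth s (s :: M')) (map val (enum 'I_(size M').+1)) by rewrite -map_comp.
  by rewrite val_enum_ord map_nth_iota0 // take_oversize.
by rewrite Hm.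
Qed.

Lemma div_le a b m : 0 < m -> a <= b * m -> a / m <= b.
Proof.
move=> Hm H; apply: (Rmult_le_reg_r m) => //.
rewrite /Rdiv Rmult_assoc Rinv_l; lra.
Qed.


Definition mins {n} (r : rel 'I_n) (S : {set 'I_n}) : {set 'I_n} :=
  [set a in S | [forall b in S, ~~ r a b]].

Lemma minsP n (r : rel 'I_n) (S : {set 'I_n}) a :
  reflect (a \in S /\ forall b, b \in S -> ~~ r a b) (a \in mins r S).
Proof.
rewrite inE; apply: (iffP andP) => [[H1 /forall_inP H2]|[H1 H2]]; split => //.
by apply/forall_inP.
Qed.

Lemma min_below n (r : rel 'I_n) (S : {set 'I_n}) : is_poset r ->
  forall k z, (#|[set y in S | r z y]| <= k)%N -> z \in S ->
  exists2 m, m \in mins r S & (m = z \/ r z m).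
Proof.
move=> [Hirr Htr]; elim=> [|k IH] z Hk Hz.
  exists z => //; last by left.
  apply/minsP; split => // b Hb; apply/negP => Hzb.
  have : (0 < #|[set y in S | r z y]|)%N.
    by apply/card_gt0P; exists b; rewrite inE Hb Hzb.
  by rewrite leqn0 in Hk; rewrite (eqP Hk).
case: (boolP [forall b in S, ~~ r z b]) => [/forall_inP H|].
  by exists z; [apply/minsP|left].
rewrite negb_forall_in => /existsP [b /andP [Hb /negPn Hzb]].
have Hlt : (#|[set y in S | r b y]| < #|[set y in S | r z y]|)%N.
  apply: proper_card; apply/properP; split.
    apply/subsetP => y; rewrite !inE => /andP [-> Hby] /=; exact: Htr Hzb Hby.
  exists b; first by rewrite inE Hb Hzb.
  by rewrite inE (negbTE (Hirr b)) andbF.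
have [m Hm Hbm] := IH b (leq_trans Hlt Hk) Hb.
exists m => //; right; case: Hbm => [->//|]; exact: Htr Hzb.
Qed.


Lemma min_below' n (r : rel 'I_n) (S : {set 'I_n}) z : is_poset r -> z \in S ->
  exists2 m, m \in mins r S & (m = z \/ r z m).
Proof. by move=> Hp; exact: (@min_below n r S Hp _ z (leqnn _)). Qed.

Lemma valid_succ n (r : rel 'I_n) (S' : {set 'I_n}) x (M0 : seq 'I_n) y :
  is_poset r -> x \notin S' -> [set z in M0] = mins r S' -> y \in M0 -> r x y ->
  [set z in M0] = mins r (x |: S').
Proof.
move=> [Hirr Htr] HxS HM0 Hy Hxy.
have : y \in mins r S' by rewrite -HM0 inE.
move=> /minsP [HyS Hymin].
rewrite HM0; apply/setP => z; apply/minsP/minsP => [[HzS Hz]|[HzS Hz]].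
  split; first by rewrite !inE HzS orbT.
  move=> b; rewrite !inE => /orP [/eqP ->|]; last exact: Hz.
  by apply/negP => Hzx; move: (Hz y HyS); rewrite (Htr _ _ _ Hzx Hxy).
have Hzx : z != x.
  apply/negP => /eqP Ezx; move: (Hz y); rewrite !inE HyS orbT Ezx Hxy.
  by move=> /(_ isT).
move: HzS; rewrite !inE (negbTE Hzx) /= => HzS.
by split => // b Hb; apply: Hz; rewrite !inE Hb orbT.
Qed.

Lemma valid_empty n (r : rel 'I_n) (S' : {set 'I_n}) x (M0 keep : seq 'I_n) :
  is_poset r -> x \notin S' -> [set z in M0] = mins r S' ->
  {subset keep <= M0} ->
  (forall y, y \in keep -> ~~ r x y /\ ~~ r y x) ->
  (forall y, y \in M0 -> y \in keep \/ r y x) ->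
  [set z in x :: keep] = mins r (x |: S').
Proof.
move=> Hp HxS HM0 Hk1 Hk2 Hk3; have [Hirr Htr] := Hp.
apply/setP => z; rewrite inE in_cons.
case: (eqVneq z x) => [->|Hzx] /=.
  symmetry; apply/minsP; split; first by rewrite !inE eqxx.
  move=> b; rewrite !inE => /orP [/eqP ->|HbS]; first exact: Hirr.
  apply/negP => Hxb.
  have [m Hm Hbm] := @min_below' n r S' b Hp HbS.
  have Hxm : r x m by case: Hbm => [->|]; [|exact: Htr].
  have : m \in M0 by rewrite -HM0 in Hm; rewrite inE in Hm.
  move=> /Hk3 [/Hk2 [] | Hmx]; first by rewrite Hxm.
  by move: (Hirr x); rewrite (Htr _ _ _ Hxm Hmx).
apply/idP/minsP => [Hzk|[HzS Hz]].
  have : z \in [set z in M0] by rewrite inE; apply: Hk1.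
  rewrite HM0 => /minsP [HzS Hz]; split; first by rewrite !inE HzS orbT.
  move=> b; rewrite !inE => /orP [/eqP ->|]; last exact: Hz.
  by case: (Hk2 _ Hzk).
move: HzS; rewrite !inE (negbTE Hzx) /= => HzS.
have : z \in mins r S'.
  by apply/minsP; split => // b Hb; apply: Hz; rewrite !inE Hb orbT.
rewrite -HM0 inE => /Hk3 [//|Hzx'].
by move: (Hz x); rewrite !inE eqxx Hzx' => /(_ isT).
Qed.


Definition insbr {n} (rec : seq 'I_n -> seq 'I_n -> alg n) (x y : 'I_n)
    (M M0 keep : seq 'I_n) (k : seq 'I_n -> alg n) : alg n :=
  Query x y (fun a => match a with
           | Defs.Succ => k M0
           | Defs.Prec => rec (rem y M) keep
           | Defs.Incomp => rec (rem y M) (y :: keep)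
           end).

Fixpoint ins {n} (fuel : nat) (x : 'I_n) (M M0 keep : seq 'I_n)
    (k : seq 'I_n -> alg n) : alg n :=
  match fuel with
  | O => k (x :: keep)
  | fuel'.+1 =>
    match M with
    | [::] => k (x :: keep)
    | s :: M' => Rand (fun i : 'I_(size M').+1 =>
        insbr (fun M2 keep2 => ins fuel' x M2 M0 keep2 k) x (nth s (s :: M') i)
          (s :: M') M0 keep k)
    end
  end.

Lemma E_query n (r : rel 'I_n) x y f :
  expected_queries r (Query x y f) = 1 + expected_queries r (f (oracle r x y)).
Proof. by []. Qed.

Lemma A_query n (r : rel 'I_n) T x y f :
  always_outputs r T (Query x y f) = always_outputs r T (f (oracle r x y)).
Proof. by []. Qed.

Lemma ins_spec n (r : rel 'I_n) (T S' : {set 'I_n}) x (M0 : seq 'I_n) B k :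
  is_poset r -> x \notin S' -> uniq M0 -> [set y in M0] = mins r S' ->
  (forall N, uniq N -> [set y in N] = mins r (x |: S') ->
     always_outputs r T (k N) /\ expected_queries r (k N) <= B) ->
  forall fuel (M keep : seq 'I_n), (size M <= fuel)%N -> uniq M -> uniq keep ->
  {subset M <= M0} -> {subset keep <= M0} -> (forall y, y \in keep -> y \notin M) ->
  (forall y, y \in keep -> ~~ r x y /\ ~~ r y x) ->
  (forall y, y \in M0 -> [\/ y \in M, y \in keep | r y x]) ->
  always_outputs r T (ins fuel x M M0 keep k) /\
  expected_queries r (ins fuel x M M0 keep k) <= INR (size M) + B /\
  (has (r x) M -> expected_queries r (ins fuel x M M0 keep k) <= (INR (size M) + 1)/2 + B).
Proof.
move=> Hp HxS HuM0 HM0 Hk; have [Hirr Htr] := Hp.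
have Hemp : forall keep : seq 'I_n, uniq keep -> {subset keep <= M0} ->
  (forall y, y \in keep -> ~~ r x y /\ ~~ r y x) ->
  (forall y, y \in M0 -> [\/ y \in [::], y \in keep | r y x]) ->
  always_outputs r T (k (x :: keep)) /\ expected_queries r (k (x :: keep)) <= B.
  move=> keep Hu Hk1 Hk2 Hk3; apply: Hk.
    rewrite /= Hu andbT; apply/negP => /Hk1 Hx.
    have : x \in mins r S' by rewrite -HM0 inE.
    by move/minsP => [H _]; rewrite H in HxS.
  apply: (@valid_empty n r S' x M0 keep) => // y /Hk3 [] //; by [left|right].
elim=> [|fuel IH] M keep Hsz HuM Huk HM1 Hk1 Hk2 Hk3 Hk4.
  case: M Hsz HuM HM1 Hk2 Hk4 => [|//] _ _ _ _ Hk4.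
  have [H1 H2] := Hemp keep Huk Hk1 Hk3 Hk4.
  split => //; split => //=; rewrite Rplus_0_l //.
case: M Hsz HuM HM1 Hk2 Hk4 => [|s M'] Hsz HuM HM1 Hk2 Hk4.
  have [H1 H2] := Hemp keep Huk Hk1 Hk3 Hk4.
  split => //; split => //=; rewrite Rplus_0_l //.
set M := s :: M'.
have Hbr : forall y, y \in M ->
  (always_outputs r T (insbr (fun M2 keep2 => ins fuel x M2 M0 keep2 k) x y M M0 keep k)) /\
  (expected_queries r (insbr (fun M2 keep2 => ins fuel x M2 M0 keep2 k) x y M M0 keep k)
    <= INR (size M') + 1 + B) /\
  (has (r x) M -> expected_queries r
      (insbr (fun M2 keep2 => ins fuel x M2 M0 keep2 k) x y M M0 keep k)
    <= (1 + B) + (if predC (r x) y then INR (size M').+1 / 2 else 0)).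
  move=> y HyM.
  have HyM0 := HM1 _ HyM.
  have Hsz' : (size (rem y M) <= fuel)%N by rewrite size_rem.
  have Hsz2 : size (rem y M) = size M' by rewrite size_rem.
  have HuR : uniq (rem y M) by apply: rem_uniq.
  have HsubR : {subset rem y M <= M0} by move=> z /mem_rem /HM1.
  have HnkR : forall z, z \in keep -> z \notin rem y M.
    by move=> z /Hk2 Hz; apply/negP => /mem_rem; apply/negP.
  rewrite /insbr E_query A_query /oracle.
  case Hxy: (r x y).
    have Hv := @valid_succ n r S' x M0 y Hp HxS HM0 HyM0 Hxy.
    have [H1 H2] := Hk M0 HuM0 Hv.
    have := pos_INR (size M'); move: H2; split => //; split; [|move=> _]; cbn -[INR]; rewrite ?Hxy; cbn -[INR]; lra.
  have HhasR : has (r x) M -> has (r x) (rem y M).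
    move=> /hasP [z Hz Hxz]; apply/hasP; exists z => //.
    rewrite (mem_rem_uniq _ HuM) inE Hz andbT.
    by apply/negP => /eqP Ezy; rewrite Ezy Hxy in Hxz.
  have Hk4R : forall z, z \in M0 -> z != y -> [\/ z \in rem y M, z \in keep | r z x].
    move=> z /Hk4 [HzM|Hzk|Hzx] Hzy; [apply: Or31|exact: Or32|exact: Or33].
    by rewrite (mem_rem_uniq _ HuM) inE Hzy.
  have Hfin : forall E, E <= INR (size M') + B -> (has (r x) M -> E <= (INR (size M') + 1) / 2 + B) ->
    (1 + E <= INR (size M') + 1 + B) /\ (has (r x) M -> 1 + E <=
       1 + B + (if predC (r x) y then INR (size M').+1 / 2 else 0)).
    move=> E HE1 HE2; split; first lra.
    move=> Hh; cbn -[INR]; rewrite Hxy; cbn -[INR]; rewrite S_INR; have := HE2 Hh; lra.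
  case Hyx: (r y x).
    have Hk4' : forall z, z \in M0 -> [\/ z \in rem y M, z \in keep | r z x].
      move=> z Hz; case: (eqVneq z y) => [->|Hzy]; [exact: Or33|exact: Hk4R].
    have [H1 [H2 H3]] := IH (rem y M) keep Hsz' HuR Huk HsubR Hk1 HnkR Hk3 Hk4'.
    rewrite Hsz2 in H2 H3.
    have [F1 F2] := Hfin _ H2 (fun h => H3 (HhasR h)).
    by split => //; split.
  have Hyk : y \notin keep by apply/negP => /Hk2; rewrite HyM.
  have Hk4' : forall z, z \in M0 -> [\/ z \in rem y M, z \in y :: keep | r z x].
    move=> z Hz; case: (eqVneq z y) => [->|Hzy].
      by apply: Or32; rewrite inE eqxx.
    case: (Hk4R z Hz Hzy) => [H|H|H]; [exact: Or31| |exact: Or33].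
    by apply: Or32; rewrite inE H orbT.
  have Huk' : uniq (y :: keep) by rewrite /= Hyk Huk.
  have Hk1' : {subset y :: keep <= M0}.
    by move=> z; rewrite inE => /orP [/eqP ->|/Hk1].
  have HnkR' : forall z, z \in y :: keep -> z \notin rem y M.
    move=> z; rewrite inE => /orP [/eqP ->|/HnkR //].
    by rewrite mem_rem_uniqF.
  have Hk3' : forall z, z \in y :: keep -> ~~ r x z /\ ~~ r z x.
    move=> z; rewrite inE => /orP [/eqP ->|/Hk3 //].
    by rewrite Hxy Hyx.
  have [H1 [H2 H3]] := IH (rem y M) (y :: keep) Hsz' HuR Huk' HsubR Hk1' HnkR' Hk3' Hk4'.
  rewrite Hsz2 in H2 H3.
  have [F1 F2] := Hfin _ H2 (fun h => H3 (HhasR h)).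
  by split => //; split.
pose G := fun y => insbr (fun M2 keep2 => ins fuel x M2 M0 keep2 k) x y M M0 keep k.
have -> : ins fuel.+1 x M M0 keep k = Rand (fun i : 'I_(size M').+1 =>
    G (nth s (s :: M') i)) by [].
rewrite (E_rand n r G s M').
have Hm : 0 < INR (size M').+1 by apply: lt_0_INR; apply/ltP.
have Hm1 := pos_INR (size M').
split; last split.
- move=> i /=; apply: (proj1 (Hbr _ _)); exact: mem_nth.
- apply: div_le => //.
  apply: Rle_trans (@sumR_le _ M _ (fun _ => INR (size M') + 1 + B) _) _.
    by move=> y /Hbr [_ [H _]].
  rewrite sumR_const; change (size (s :: M')) with (size M').+1.
  rewrite S_INR; nra.
- move=> Hhas; apply: div_le => //.
  apply: Rle_trans (@sumR_le _ M _ (fun y => (1 + B) +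
      (if predC (r x) y then INR (size M').+1 / 2 else 0)) _) _.
    by move=> y /Hbr [_ [_ H]]; apply: H.
  rewrite sumR_add sumR_const sumR_ind; change (size (s :: M')) with (size M').+1.
  have Hc : (count (predC (r x)) M <= size M')%N.
    have := count_predC (r x) M; rewrite has_count in Hhas.
    rewrite /M /= => H; rewrite -ltnS -H.
    by rewrite -[X in (X < _)%N]add0n ltn_add2r.
  have Hc' := le_INR _ _ (elimT leP Hc).
  rewrite S_INR in Hm *.
  move: Hc'; set c := INR (count _ M); move=> Hc'.
  have Hq : 0 <= (INR (size M') + 1) * (INR (size M') - c) by apply: Rmult_le_pos; lra.
  match goal with |- ?a <= ?b => have : 2 * (b - a) = (INR (size M') + 1) *
     (INR (size M') - c) by field end.
  lra.
Qed.


Fixpoint algS {n} (fuel : nat) (S : seq 'I_n) (k : seq 'I_n -> alg n) : alg n :=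
  match fuel with
  | O => k [::]
  | fuel'.+1 =>
    match S with
    | [::] => k [::]
    | s :: S' => Rand (fun i : 'I_(size S').+1 =>
        (fun x => algS fuel' (rem x (s :: S')) (fun M => ins (size M) x M M [::] k))
        (nth s (s :: S') i))
    end
  end.

Definition step (w j : nat) : R :=
  if (j <= w)%N then INR j - 1
  else (INR w + 1) / 2 + INR w / INR j * ((INR w - 1) / 2).

Fixpoint Fw (w j : nat) : R :=
  match j with O => 0 | j'.+1 => Fw w j' + step w j'.+1 end.

Lemma card_list n (N : seq 'I_n) : uniq N -> #|[set y in N]| = size N.
Proof. by move=> Hu; rewrite cardsE; apply/card_uniqP. Qed.

Lemma mins_card n (r : rel 'I_n) w S : width_le r w -> (#|mins r S| <= w)%N.
Proof.
move=> Hw; apply: Hw => x y /minsP [Hx Hxm] /minsP [Hy Hym] _.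
by split; [apply: Hxm | apply: Hym].
Qed.

Lemma mins_sub n (r : rel 'I_n) S : mins r S \subset S.
Proof. by apply/subsetP => x /minsP []. Qed.

Lemma algS_spec n (r : rel 'I_n) w T : is_poset r -> width_le r w -> (1 <= w)%N ->
  forall fuel S k B, (size S <= fuel)%N -> uniq S ->
  (forall N, uniq N -> [set y in N] = mins r [set y in S] ->
     always_outputs r T (k N) /\ expected_queries r (k N) <= B) ->
  always_outputs r T (algS fuel S k) /\ expected_queries r (algS fuel S k) <= Fw w (size S) + B.
Proof.
move=> Hp Hw Hw1; have [Hirr Htr] := Hp.
have Hnil : forall k B, (forall N, uniq N -> [set y in N] = mins r [set y in [::]] ->
     always_outputs r T (k N) /\ expected_queries r (k N) <= B) ->
     always_outputs r T (k [::]) /\ expected_queries r (k [::]) <= Fw w 0 + B.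
  move=> k B Hk.
  have Hv : [set y in [::]] = mins r [set y in ([::] : seq 'I_n)].
    apply/setP => z; rewrite [in LHS]inE; symmetry; apply/negbTE/negP.
    by move=> /minsP []; rewrite inE.
  have [H1 H2] := Hk [::] isT Hv.
  by split => //; rewrite /= Rplus_0_l.
elim=> [|fuel IH] S k B Hsz HuS Hk.
  by case: S Hsz HuS Hk => // _ _ Hk; apply: Hnil.
case: S Hsz HuS Hk => [|s S'] Hsz HuS Hk; first by apply: Hnil.
set S := s :: S'.
pose G := fun x => algS fuel (rem x S) (fun M => ins (size M) x M M [::] k).
have -> : algS fuel.+1 S k = Rand (fun i : 'I_(size S').+1 => G (nth s (s :: S') i)) by [].
have Hclaim : forall x, x \in S -> forall c,
    (x \in mins r [set y in S] -> forall m : nat, (m <= size S')%N -> (m <= w)%N -> INR m <= c) ->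
    (x \notin mins r [set y in S] -> forall m : nat, (0 < m)%N -> (m <= size S')%N ->
       (m <= w)%N -> (INR m + 1) / 2 <= c) ->
    always_outputs r T (G x) /\ expected_queries r (G x) <= Fw w (size S') + (c + B).
  move=> x HxS c Hc1 Hc2.
  have HuR : uniq (rem x S) by apply: rem_uniq.
  have HszR : size (rem x S) = size S' by rewrite size_rem.
  rewrite -HszR; apply: IH; [by rewrite HszR| exact: HuR |].
  move=> N HuN HN.
  have HxR : x \notin [set y in rem x S] by rewrite inE mem_rem_uniqF.
  have HxU : x |: [set y in rem x S] = [set y in S].
    apply/setP => z; rewrite !inE (mem_rem_uniq _ HuS) inE.
    by case: (eqVneq z x) => [->|] //=; rewrite HxS.
  have [H1 [H2 H3]] := @ins_spec n r T [set y in rem x S] x N B k Hp HxR HuN HN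
    (fun N' HuN' HN' => Hk N' HuN' (etrans HN' (congr1 (mins r) HxU)))
    (size N) N [::] (leqnn _) HuN isT (fun z h => h) (fun z h => match notF h with end)
    (fun z h => match notF h with end) (fun z h => match notF h with end)
    (fun z h => Or31 _ _ h).
  have HsN : (size N <= size S')%N.
    rewrite -card_list // HN -HszR -card_list //.
    by apply: subset_leq_card; apply: mins_sub.
  have HwN : (size N <= w)%N by rewrite -card_list // HN; apply: mins_card.
  split => //; cbv beta.
  case: (boolP (x \in mins r [set y in S])) => Hxm.
    by apply: Rle_trans H2 _; apply: Rplus_le_compat_r; apply: Hc1.
  have Hhas : has (r x) N.
    move: Hxm; rewrite inE inE HxS /= negb_forall_in => /existsP [b /andP [Hb /negPn Hxb]].
    have HbR : b \in [set y in rem x S].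
      rewrite inE (mem_rem_uniq _ HuS) inE -[b \in S]inE Hb andbT.
      by apply/negP => /eqP Ebx; move: (Hirr x); rewrite -{2}Ebx Hxb.
    have [m Hm Hbm] := @min_below' n r _ b Hp HbR.
    apply/hasP; exists m; first by rewrite -HN inE in Hm.
    by case: Hbm => [->|]; [|exact: Htr].
  have HN1 : (0 < size N)%N by case: (N) Hhas.
  by apply: Rle_trans (H3 Hhas) _; apply: Rplus_le_compat_r; apply: Hc2.
rewrite (E_rand n r G s S').
have Hj0 : 0 < INR (size S').+1 by apply: lt_0_INR; apply/ltP.
have HS' := pos_INR (size S').
change (Fw w (size S)) with (Fw w (size S') + step w (size S').+1).
split.
  move=> i /=; have Hi : nth s S i \in S by apply: mem_nth.
  have [||H _] := Hclaim _ Hi (INR (size S') + INR w); last exact: H.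
    move=> _ m H1 _; have := le_INR _ _ (elimT leP H1); have := pos_INR w; lra.
  move=> _ m H0 H1 H2; have := le_INR _ _ (elimT leP H1); have := le_INR _ _ (elimT leP H0); have := pos_INR w; rewrite /=; lra.
apply: div_le => //.
case: (boolP ((size S').+1 <= w)%N) => Hj.
  apply: Rle_trans (@sumR_le _ S _ (fun _ => Fw w (size S') + (INR (size S') + B)) _) _.
    move=> x Hx; have [||_ H] := Hclaim x Hx (INR (size S')) => //.
      by move=> _ m H1 _; apply: le_INR; apply/leP.
    move=> _ m H0 H1 _; have := le_INR _ _ (elimT leP H1); have := le_INR _ _ (elimT leP H0).
    rewrite /=; lra.
  rewrite sumR_const /step Hj; change (size S) with (size S').+1; rewrite S_INR.
  rewrite S_INR in Hj0; nra.
pose p : pred 'I_n := fun x => x \in mins r [set y in S].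
have HwR : 1 <= INR w by apply: (le_INR 1); apply/leP.
apply: Rle_trans (@sumR_le _ S _ (fun x => (Fw w (size S') + ((INR w + 1) / 2 + B))
   + (if p x then (INR w - 1) / 2 else 0)) _) _.
  move=> x Hx.
  have [||_ H] := Hclaim x Hx ((INR w + 1) / 2 + (if p x then (INR w - 1) / 2 else 0)).
  - move=> Hm m _ H1; rewrite /p Hm; have := le_INR _ _ (elimT leP H1); lra.
  - move=> Hm m _ _ H1; rewrite /p (negbTE Hm); have := le_INR _ _ (elimT leP H1); lra.
  - lra.
rewrite sumR_add sumR_const sumR_ind /step (negbTE Hj).
change (size S) with (size S').+1.
have Hcnt : (count p S <= w)%N.
  rewrite -size_filter -card_list ?filter_uniq //.
  apply: leq_trans (@mins_card n r w [set y in S] Hw).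
  by apply: subset_leq_card; apply/subsetP => y; rewrite inE mem_filter => /andP [].
move: Hj0 (le_INR _ _ (elimT leP Hcnt)); set c := INR (count p S); set J := INR (size S').+1.
move=> Hj0 Hc.
have Hq : 0 <= (INR w - c) * (INR w - 1) by apply: Rmult_le_pos; lra.
match goal with |- ?a <= ?b => have : 2 * (b - a) = (INR w - c) * (INR w - 1) by field; lra end.
lra.
Qed.


Lemma div_le' a b : 0 < b -> b < 1 -> 0 <= a -> a <= a / b.
Proof.
move=> Hb Hb1 Ha; apply: (Rmult_le_reg_r b) => //.
rewrite /Rdiv Rmult_assoc Rinv_l; nra.
Qed.

Lemma ln_le' x y : 0 < x -> x <= y -> ln x <= ln y.
Proof.
move=> Hx Hxy; case: (Rle_lt_or_eq_dec _ _ Hxy) => H.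
  by apply: Rlt_le; apply: ln_increasing.
by rewrite H; apply: Rle_refl.
Qed.

Lemma ln_step x : 0 < x -> 1 / (x + 1) <= ln (x + 1) - ln x.
Proof.
move=> Hx.
set t := 1 / (x + 1).
have Ht : 1 - t <= exp (- t) by have := exp_ineq1_le (- t); lra.
have Hxe : x <= (x + 1) * exp (- t).
  apply: (Rle_trans _ ((x + 1) * (1 - t))).
    by right; rewrite /t; field; lra.
  apply: Rmult_le_compat_l; lra.
have := ln_le' _ _ Hx Hxe.
rewrite ln_mult; [|lra|exact: exp_pos].
rewrite ln_exp; lra.
Qed.

Lemma ln2_lt1 : ln 2 < 1.
Proof.
rewrite -[X in _ < X]ln_exp; apply: ln_increasing; first lra.
have := exp_ineq1 1; lra.
Qed.

Lemma Fw_small w j : (j <= w)%N -> Fw w j = INR j * (INR j - 1) / 2.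
Proof.
elim: j => [|j IH] Hj; first by rewrite /=; field.
change (Fw w j.+1) with (Fw w j + step w j.+1).
rewrite IH ?(ltnW Hj) // /step Hj S_INR; field.
Qed.

Lemma Fw_large w k : (1 <= w)%N ->
  Fw w (w + k) <= (INR w + 1) / 2 * INR (w + k) - INR w
     + (INR w ^ 2 - INR w) / 2 * (ln (INR (w + k)) - ln (INR w)).
Proof.
move=> Hw; have Hw1 : 1 <= INR w by apply: (le_INR 1); apply/leP.
elim: k => [|k IH].
  rewrite addn0 Fw_small // Rminus_diag; right; field.
rewrite addnS.
change (Fw w (w + k).+1) with (Fw w (w + k) + step w (w + k).+1).
have Hn : ~~ ((w + k).+1 <= w)%N by rewrite -ltnNge ltnS leq_addr.
rewrite /step (negbTE Hn) S_INR.
have Hx : 0 < INR (w + k) by apply: lt_0_INR; apply/ltP; rewrite addn_gt0 Hw.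
have Hl := ln_step _ Hx.
have Hq : 0 <= (INR w ^ 2 - INR w) / 2 by nra.
have : (INR w ^ 2 - INR w) / 2 * (1 / (INR (w + k) + 1)) <=
       (INR w ^ 2 - INR w) / 2 * (ln (INR (w + k) + 1) - ln (INR (w + k))).
  by apply: Rmult_le_compat_l.
have -> : (INR w ^ 2 - INR w) / 2 * (1 / (INR (w + k) + 1)) =
   INR w / (INR (w + k) + 1) * ((INR w - 1) / 2) by field; lra.
lra.
Qed.


Theorem theorem8 :
  forall n : nat, exists A : alg n,
    forall (w : nat) (r : rel 'I_n),
      (1 <= w <= n)%N -> is_poset r -> width_le r w ->
      always_outputs r (minimal_set r) A /\
      expected_queries r A <=
         (INR w + 1) / 2 * INR n
         + (INR w ^ 2 - INR w) / 2 * (log2 (INR n) - log2 (INR w)).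
Proof.
move=> n; exists (algS n (enum 'I_n) (fun M => Ret [set y in M])).
move=> w r /andP [Hw1 Hwn] Hp Hw.
have Hcont : forall N, uniq N -> [set y in N] = mins r [set y in enum 'I_n] ->
    always_outputs r (minimal_set r) (Ret [set y in N]) /\
    expected_queries r (Ret [set y in N]) <= 0.
  move=> N _ HN; split; last by apply: Rle_refl.
  rewrite /= HN; apply/setP => z; rewrite /minimal_set [in RHS]inE.
  apply/minsP/forallP => [[_ H] b|H]; first by apply: H; rewrite inE mem_enum.
  by split; [rewrite inE mem_enum | move=> b _; apply: H].
have [H1 H2] := @algS_spec n r w (minimal_set r) Hp Hw Hw1 n (enum 'I_n)
   (fun M => Ret [set y in M]) 0 (eq_leq (size_enum_ord n)) (enum_uniq _) Hcont.
split => //.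
move: H2; rewrite size_enum_ord Rplus_0_r => H2.
have HF := Fw_large w (n - w) Hw1; rewrite (subnKC Hwn) in HF.
apply: Rle_trans H2 _; apply: Rle_trans HF _.
rewrite /log2.
have L2 : ln (INR 2) = ln 2 by congr ln; rewrite /=; lra.
rewrite L2.
have HwR : 1 <= INR w by apply: (le_INR 1); apply/leP.
have HD : 0 <= ln (INR n) - ln (INR w).
  have : ln (INR w) <= ln (INR n).
    by apply: ln_le'; [lra| apply: le_INR; apply/leP].
  lra.
have Hl2 := ln2_lt1.
have Hl2p : 0 < ln 2 by have := ln_lt_2; lra.
have HD2 : ln (INR n) - ln (INR w) <=
    ln (INR n) / ln 2 - ln (INR w) / ln 2.
  have -> : ln (INR n) / ln 2 - ln (INR w) / ln 2 =
     (ln (INR n) - ln (INR w)) / ln 2 by field; lra.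
  apply: div_le' => //.
have Hq : 0 <= (INR w ^ 2 - INR w) / 2 by nra.
have := Rmult_le_compat_l _ _ _ Hq HD2.
lra.
Qed.
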